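(* Let $n\geq 0$ and $0\leq l\leq n$ be integers. Then \[ \sum_{k=1}^{n}{n\brack k}\frac{(q/z;q)_k (zq^{-l};q)_{n-k}}{1-q^k} z^k =(zq^{-l};q)_n\left(\sum_{k=1}^{n-l}\frac{zq^{k-1}}{1-zq^{k-1}}-\sum_{k=1}^n\frac{q^k}{1-q^k}\right). \]
   Context: For $N\geq 0$, $(x;q)_N=(1-x)(1-xq)\cdots(1-xq^{N-1})$ (with $(x;q)_0=1$). The $q$-binomial coefficient is ${n\brack k}=\frac{(q;q)_n}{(q;q)_k(q;q)_{n-k}}$ for $0\leq k\leq n$ and $0$ otherwise. The identity is one of rational functions in $q$ and $z$. *)

(* Defs.v *)
From mathcomp Require Import all_boot all_order all_algebra.
Set Implicit Arguments. Unset Strict Implicit. Unset Printing Implicit Defensive.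
Import Order.TTheory GRing.Theory Num.Theory.
Local Open Scope ring_scope.

Definition qpoch (F : fieldType) (x q : F) (N : nat) : F :=
  \prod_(i < N) (1 - x * q ^+ i).

Definition qbinom (F : fieldType) (q : F) (n k : nat) : F :=
  if (k <= n)%N then qpoch q q n / (qpoch q q k * qpoch q q (n - k)) else 0.

(* Main.v *)
Require Import Defs.
From mathcomp Require Import all_boot all_order all_algebra.
Import GRing.Theory.
From mathcomp Require Import ring zify.
Local Open Scope ring_scope.
Set Implicit Arguments. Unset Strict Implicit.

Section S.
Variable F : fieldType.
Implicit Types x q : F.

Lemma qpoch0 x q : qpoch x q 0 = 1.
Proof. by rewrite /qpoch big_ord0. Qed.

Lemma qpochS x q m : qpoch x q m.+1 = qpoch x q m * (1 - x * q ^+ m).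
Proof. by rewrite /qpoch big_ord_recr. Qed.

Lemma qpochSl x q m : qpoch x q m.+1 = (1 - x) * qpoch (x * q) q m.
Proof.
rewrite /qpoch big_ord_recl expr0 mulr1; congr (_ * _).
by apply: eq_bigr => i _; rewrite /= exprS mulrA.
Qed.

Lemma PqS q m : qpoch q q m.+1 = qpoch q q m * (1 - q ^+ m.+1).
Proof. by rewrite qpochS -exprS. Qed.

Definition hypq q N := forall k, (1 <= k <= N)%N -> 1 - q ^+ k != 0.

Lemma hypq_le q N M : (M <= N)%N -> hypq q N -> hypq q M.
Proof. move=> le h k /andP[k1 kM]; apply: h; rewrite k1 /=; exact: leq_trans kM le. Qed.

Lemma Pq_neq0 q N m : hypq q N -> (m <= N)%N -> qpoch q q m != 0.
Proof.
move=> h; elim: m => [|m IH] le; first by rewrite qpoch0 oner_neq0.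
rewrite PqS mulf_neq0 ?IH ?(ltnW le) //.
by apply: h; rewrite le.
Qed.

Lemma qbinomE q n k : (k <= n)%N ->
  qbinom q n k = qpoch q q n / (qpoch q q k * qpoch q q (n - k)).
Proof. by rewrite /qbinom => ->. Qed.

Lemma qbinom_out q n k : (n < k)%N -> qbinom q n k = 0.
Proof. by rewrite /qbinom ltnNge => /negbTE ->. Qed.

Lemma qbinom0 q n : hypq q n -> qbinom q n 0 = 1.
Proof.
move=> h; rewrite qbinomE // subn0 qpoch0 mul1r divff //.
exact: (Pq_neq0 h (leqnn n)).
Qed.

Lemma qbinomnn q n : hypq q n -> qbinom q n n = 1.
Proof.
move=> h; rewrite qbinomE // subnn qpoch0 mulr1 divff //.
exact: (Pq_neq0 h (leqnn n)).
Qed.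


Lemma pascal1 q n j : hypq q n.+1 ->
  qbinom q n.+1 j.+1 = q ^+ j.+1 * qbinom q n j.+1 + qbinom q n j.
Proof.
move=> h.
case: (leqP j.+1 n) => [le|gt].
- have [r er] : exists r, n = (j.+1 + r)%N by exists (n - j.+1)%N; rewrite subnKC.
  rewrite (@qbinomE q (n.+1) (j.+1)) ?(@qbinomE q (n) (j.+1))
     ?(@qbinomE q (n) (j)); try lia.
  have e1 : (n - j = r.+1)%N by lia.
  have e2 : (n - j.+1 = r)%N by lia.
  rewrite subSS e1 e2.
  have nz := Pq_neq0 h.
  have n1 : qpoch q q n != 0 by apply: nz; lia.
  have n2 : qpoch q q j != 0 by apply: nz; lia.
  have n3 : qpoch q q r != 0 by apply: nz; lia.
  have n4 : 1 - q ^+ j.+1 != 0 by apply: h; lia.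
  have n5 : 1 - q ^+ r.+1 != 0 by apply: h; lia.
  rewrite (PqS q n) (PqS q j) (PqS q r).
  have -> : q ^+ n.+1 = q ^+ j.+1 * q ^+ r.+1 by rewrite -exprD er addnS addSn.
  move: n1 n2 n3 n4 n5.
  set A := qpoch q q n; set B := qpoch q q j; set C := qpoch q q r.
  set x := q ^+ j.+1; set y := q ^+ r.+1 => n1 n2 n3 n4 n5.
  by field; rewrite ?n2 ?n3 ?n4 ?n5.
- rewrite (@qbinom_out q n j.+1) // mulr0 add0r.
  have [->|lt] : j = n \/ (n < j)%N by lia.
    rewrite !qbinomnn //; exact: hypq_le h.
  by rewrite !qbinom_out // ltnW.
Qed.

Lemma pascal2 q n j : hypq q n.+1 ->
  qbinom q n.+1 j.+1 = qbinom q n j.+1 + q ^+ (n - j) * qbinom q n j.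
Proof.
move=> h.
case: (leqP j.+1 n) => [le|gt].
- have [r er] : exists r, n = (j.+1 + r)%N by exists (n - j.+1)%N; rewrite subnKC.
  rewrite (@qbinomE q (n.+1) (j.+1)) ?(@qbinomE q (n) (j.+1))
     ?(@qbinomE q (n) (j)); try lia.
  have e1 : (n - j = r.+1)%N by lia.
  have e2 : (n - j.+1 = r)%N by lia.
  rewrite subSS e1 e2.
  have nz := Pq_neq0 h.
  have n1 : qpoch q q n != 0 by apply: nz; lia.
  have n2 : qpoch q q j != 0 by apply: nz; lia.
  have n3 : qpoch q q r != 0 by apply: nz; lia.
  have n4 : 1 - q ^+ j.+1 != 0 by apply: h; lia.
  have n5 : 1 - q ^+ r.+1 != 0 by apply: h; lia.
  rewrite (PqS q n) (PqS q j) (PqS q r).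
  have -> : q ^+ n.+1 = q ^+ j.+1 * q ^+ r.+1 by rewrite -exprD er addnS addSn.
  move: n1 n2 n3 n4 n5.
  set A := qpoch q q n; set B := qpoch q q j; set C := qpoch q q r.
  set x := q ^+ j.+1; set y := q ^+ r.+1 => n1 n2 n3 n4 n5.
  by field; rewrite ?n2 ?n3 ?n4 ?n5.
- rewrite (@qbinom_out q n j.+1) // add0r.
  have [->|lt] : j = n \/ (n < j)%N by lia.
    rewrite subnn expr0 mul1r !qbinomnn //; exact: hypq_le h.
  by rewrite !qbinom_out ?mulr0 // ltnW.
Qed.

Lemma babs1 q n j : hypq q n.+1 ->
  qbinom q n j * (1 - q ^+ n.+1) = qbinom q n.+1 j.+1 * (1 - q ^+ j.+1).
Proof.
move=> h.
case: (leqP j n) => [le|gt].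
- have [r er] : exists r, n = (j + r)%N by exists (n - j)%N; rewrite subnKC.
  rewrite (@qbinomE q (n.+1) (j.+1)) ?(@qbinomE q (n) (j)); try lia.
  rewrite subSS.
  have e1 : (n - j = r)%N by lia.
  rewrite e1.
  have nz := Pq_neq0 h.
  have n1 : qpoch q q n != 0 by apply: nz; lia.
  have n2 : qpoch q q j != 0 by apply: nz; lia.
  have n3 : qpoch q q r != 0 by apply: nz; lia.
  have n4 : 1 - q ^+ j.+1 != 0 by apply: h; lia.
  rewrite (PqS q n) (PqS q j).
  move: n1 n2 n3 n4.
  set A := qpoch q q n; set B := qpoch q q j; set C := qpoch q q r.
  set x := q ^+ j.+1; set y := q ^+ n.+1 => n1 n2 n3 n4.
  by field; rewrite ?n2 ?n3 ?n4.
- by rewrite !qbinom_out ?mul0r.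
Qed.

Lemma babs2 q n k : hypq q n.+1 ->
  qbinom q n.+1 k * (1 - q ^+ (n.+1 - k)) = (1 - q ^+ n.+1) * qbinom q n k.
Proof.
move=> h.
case: (leqP k n) => [le|gt].
- have [r er] : exists r, n = (k + r)%N by exists (n - k)%N; rewrite subnKC.
  rewrite (@qbinomE q (n.+1) k) ?(@qbinomE q n k); try lia.
  have e1 : (n - k = r)%N by lia.
  have e2 : (n.+1 - k = r.+1)%N by lia.
  rewrite e1 e2.
  have nz := Pq_neq0 h.
  have n1 : qpoch q q n != 0 by apply: nz; lia.
  have n2 : qpoch q q k != 0 by apply: nz; lia.
  have n3 : qpoch q q r != 0 by apply: nz; lia.
  have n5 : 1 - q ^+ r.+1 != 0 by apply: h; lia.
  rewrite (PqS q n) (PqS q r).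
  move: n1 n2 n3 n5.
  set A := qpoch q q n; set B := qpoch q q k; set C := qpoch q q r.
  set x := q ^+ r.+1; set y := q ^+ n.+1 => n1 n2 n3 n5.
  by field; rewrite ?n2 ?n3 ?n5.
- rewrite (@qbinom_out q n k) // mulr0.
  have [->|lt] : k = n.+1 \/ (n.+1 < k)%N by lia.
    by rewrite subnn expr0 subrr mulr0.
  by rewrite qbinom_out ?mul0r.
Qed.

Definition fq q k : F := (-1) ^+ k * q ^+ 'C(k, 2).

Lemma fqS q k : fq q k.+1 = - q ^+ k * fq q k.
Proof.
rewrite /fq binS bin1 exprD exprS; ring.
Qed.

Lemma fq0 q : fq q 0 = 1.
Proof. by rewrite /fq expr0 bin0n expr0 mulr1. Qed.

Lemma Zsum q N : hypq q N.+1 ->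
  \sum_(k < N.+2) qbinom q N.+1 k * fq q k = 0.
Proof.
move=> h.
have hN : hypq q N by apply: hypq_le h.
pose g k := q ^+ k * qbinom q N k * fq q k.
have e1 : \sum_(k < N.+2) g k = \sum_(k < N.+1) g k.
  by rewrite big_ord_recr /= /g qbinom_out // mulr0 mul0r addr0.
have e2 : \sum_(k < N.+2) g k = 1 + \sum_(j < N.+1) g j.+1.
  by rewrite big_ord_recl /g qbinom0 // fq0 expr0 !mul1r.
rewrite big_ord_recl qbinom0 // fq0 mul1r.
under eq_bigr => j _ do rewrite lift0 pascal1 // mulrDl.
rewrite big_split /=.
have -> : \sum_(i < N.+1) q ^+ i.+1 * qbinom q N i.+1 * fq q i.+1 = \sum_(j < N.+1) g j.+1 by [].
have -> : \sum_(i < N.+1) qbinom q N i * fq q i.+1 = - \sum_(j < N.+1) g j.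
  rewrite -sumrN; apply: eq_bigr => j _; rewrite /g fqS; ring.
have -> : \sum_(j < N.+1) g j.+1 = \sum_(k < N.+2) g k - 1 by rewrite e2; ring.
rewrite e1; ring.
Qed.

Definition Hq q n : F := \sum_(k < n.+1) q ^+ k / (1 - q ^+ k).

Lemma Ulem q n : hypq q n ->
  \sum_(k < n.+1) qbinom q n k * (- fq q k.+1) / (1 - q ^+ k) = - Hq q n.
Proof.
elim: n => [|n IH] h.
  by rewrite /Hq !big_ord1 expr0 subrr invr0 !mulr0 oppr0.
have hn : hypq q n by apply: hypq_le h.
have nzn : 1 - q ^+ n.+1 != 0 by apply: h; rewrite /= ltnS leqnn.
rewrite big_ord_recl expr0 subrr invr0 mulr0 add0r.
under eq_bigr => j _ do rewrite lift0 pascal2 // mulrDl mulrDl.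
rewrite big_split /=.
have -> : \sum_(i < n.+1) qbinom q n i.+1 * - fq q i.+2 / (1 - q ^+ i.+1) = - Hq q n.
  rewrite -(IH hn) big_ord_recr /= qbinom_out // mul0r mul0r addr0.
  rewrite [RHS]big_ord_recl expr0 subrr invr0 mulr0 add0r.
  by apply: eq_bigr => i _; rewrite lift0.
have -> : \sum_(i < n.+1) q ^+ (n - i) * qbinom q n i * - fq q i.+2 / (1 - q ^+ i.+1)
   = q ^+ n.+1 / (1 - q ^+ n.+1) * \sum_(i < n.+1) qbinom q n.+1 i.+1 * fq q i.+1.
  rewrite mulr_sumr; apply: eq_bigr => i _.
  have ni : 1 - q ^+ i.+1 != 0 by apply: h; have := ltn_ord i; lia.
  have hb := babs1 i h.
  have E : qbinom q n i = qbinom q n.+1 i.+1 * (1 - q ^+ i.+1) / (1 - q ^+ n.+1)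
    by rewrite -hb mulfK.
  have E2 : q ^+ n.+1 = q ^+ (n - i) * q ^+ i.+1 by rewrite -exprD addnS subnK // -ltnS.
  rewrite E (fqS q i.+1) E2.
  move: ni nzn; rewrite E2 => ni nzn.
  by field; rewrite ?ni ?nzn.
have Z : \sum_(i < n.+1) qbinom q n.+1 i.+1 * fq q i.+1 = -1.
  have := Zsum h; rewrite big_ord_recl qbinom0 // fq0 mul1r.
  under eq_bigr => i _ do rewrite lift0.
  by move/eqP; rewrite addrC addr_eq0 => /eqP.
rewrite Z.
rewrite /Hq [in RHS]big_ord_recr /=.
by field.
Qed.

Lemma prodlem q z n k : q != 0 -> z != 0 -> (k <= n)%N ->
  qpoch (q / z) q k * qpoch (z * q ^- n) q (n - k) * z ^+ k
  = - fq q k.+1 * qpoch (z * q ^- n) q n.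
Proof.
move=> hq hz; elim: k => [|k IH] le.
  by rewrite qpoch0 subn0 expr0 /fq expr1 bin_small // expr0; ring.
have [m em] : exists m, (n - k = m.+1)%N by exists (n - k.+1)%N; lia.
have e2 : (n - k.+1 = m)%N by lia.
have e3 : q ^+ n = q ^+ m * q ^+ k.+1 by rewrite -exprD; congr (_ ^+ _); lia.
have nQ : q ^+ m != 0 by rewrite expf_neq0.
have nX : q ^+ k != 0 by rewrite expf_neq0.
have ha : z * q ^- n * (q ^+ m * (q * q ^+ k)) = z by rewrite -exprS -e3 divfK // expf_neq0.
move: (IH (ltnW le)); rewrite em e2 qpochS (qpochS (q / z)) (fqS q k.+1) => {}IH.
transitivity (- q ^+ k.+1 * (- fq q k.+1 * qpoch (z * q ^- n) q n)); last by ring.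
rewrite -IH !exprS.
move: ha.
set a := z * q ^- n.
set A := qpoch (q / z) q k; set B := qpoch _ q m.
clearbody a A B => ha.
move: hz; rewrite -{1 2 3}ha => hz.
move: hz nQ nX.
set Q := q ^+ m; set Y := q ^+ k => hz nQ nX.
field; rewrite nX hq nQ /=.
by apply: contraNneq hz => ->; rewrite mul0r.
Qed.

Definition Gen q b c n a : F :=
  \sum_(k < n.+1) qbinom q n k * (qpoch b q k * qpoch a q (n - k)) / (1 - q ^+ k) * c ^+ k.

Lemma R1 q b c n a : q != 0 -> hypq q n.+1 ->
  Gen q b c n.+1 (a / q) = Gen q b c n.+1 a - (a / q) * (1 - q ^+ n.+1) * Gen q b c n a.
Proof.
move=> hq h.
suff E : Gen q b c n.+1 (a / q) - Gen q b c n.+1 a = - (a / q * (1 - q ^+ n.+1) * Gen q b c n a).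
  by rewrite -[LHS](subrK (Gen q b c n.+1 a)) E; ring.
rewrite /Gen [X in X - _]big_ord_recr [X in _ - X]big_ord_recr /= subnn !qpoch0.
rewrite opprD addrACA subrr addr0 -mulNr.
rewrite -sumrB mulr_sumr; apply: eq_bigr => k _.
have [m em] : exists m, (n.+1 - k = m.+1)%N by exists (n - k)%N; have := ltn_ord k; lia.
have e2 : (n - k = m)%N by lia.
rewrite em e2 (qpochS a) (qpochSl (a / q)) divfK //.
have hb := babs2 k h; rewrite em in hb.
have E : q ^+ n.+1 = q ^+ m.+1 * q ^+ k by rewrite -exprD; congr (_ ^+ _); have := ltn_ord k; lia.
set B := qbinom q n.+1 k; set C := qbinom q n k.
have hb' : C = B * (1 - q ^+ m.+1) / (1 - q ^+ n.+1).
  have nz : 1 - q ^+ n.+1 != 0 by apply: h; lia.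
  by rewrite hb [_ * C]mulrC mulfK.
rewrite hb' exprS.
have nz : 1 - q ^+ n.+1 != 0 by apply: h; lia.
set D := (1 - q ^+ k)^-1; clearbody D; rewrite exprS.
by field; rewrite hq andbT -exprS.
Qed.

Definition Sz q z m : F := \sum_(1 <= k < m.+1) (z * q ^+ k.-1) / (1 - z * q ^+ k.-1).

Lemma base q z n : q != 0 -> z != 0 -> hypq q n ->
  Gen q (q / z) z n (z * q ^- n) = qpoch (z * q ^- n) q n * (Sz q z 0 - Hq q n).
Proof.
move=> hq hz h.
rewrite /Sz big_geq // sub0r -Ulem // mulr_sumr /Gen.
apply: eq_bigr => k _.
have := prodlem hq hz (ltnSE (ltn_ord k)).
move=> E.
transitivity (qbinom q n k / (1 - q ^+ k) *
   (qpoch (q / z) q k * qpoch (z * q ^- n) q (n - k) * z ^+ k)); first by ring.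
rewrite E; ring.
Qed.

Lemma mainL q z : q != 0 -> z != 0 -> forall m n l, (n - l = m)%N -> (l <= n)%N ->
  hypq q n -> (forall k, (1 <= k <= n - l)%N -> 1 - z * q ^+ k.-1 != 0) ->
  Gen q (q / z) z n (z * q ^- l) = qpoch (z * q ^- l) q n * (Sz q z (n - l) - Hq q n).
Proof.
move=> hq hz; elim=> [|m IH] n l e le h hk.
  have -> : l = n by lia.
  by rewrite subnn base.
have [n' en] : exists n', n = n'.+1 by exists n.-1; lia.
subst n.
have le' : (l <= n')%N by lia.
have IH1 := IH n'.+1 l.+1 ltac:(lia) ltac:(lia) h
  (fun k hk' => hk k ltac:(lia)).
have IH2 := IH n' l ltac:(lia) le' (hypq_le (leqnSn _) h)
  (fun k hk' => hk k ltac:(lia)).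
have ea : z * q ^- l.+1 = z * q ^- l / q by rewrite exprSr invfM mulrA.
rewrite ea in IH1.
have := R1 (q / z) z (z * q ^- l) hq h.
rewrite IH1 IH2 => R.
have -> : Gen q (q / z) z n'.+1 (z * q ^- l) =
  qpoch (z * q ^- l / q) q n'.+1 * (Sz q z (n'.+1 - l.+1) - Hq q n'.+1) +
  z * q ^- l / q * (1 - q ^+ n'.+1) *
  (qpoch (z * q ^- l) q n' * (Sz q z (n' - l) - Hq q n')).
  by rewrite R; ring.
have e1 : (n'.+1 - l.+1 = m)%N by lia.
have e2 : (n' - l = m)%N by lia.
have e3 : (n'.+1 - l = m.+1)%N by lia.
have SS : Sz q z m.+1 = Sz q z m + z * q ^+ m / (1 - z * q ^+ m).
  by rewrite /Sz big_nat_recr.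
rewrite e1 e2 e3 SS.
rewrite /Hq big_ord_recr /= -/(Hq q n').
rewrite (qpochSl (z * q ^- l / q)) divfK // qpochS.
have nzm : 1 - z * q ^+ m != 0 by apply: (hk m.+1); lia.
have nzn : 1 - q ^+ n'.+1 != 0 by apply: h; lia.
have en' : q ^+ n' = q ^+ l * q ^+ m by rewrite -exprD; congr (_ ^+ _); lia.
rewrite exprS en' in nzn *.
have nl : q ^+ l != 0 by rewrite expf_neq0.
move: nzm nzn nl.
set A := qpoch _ q n'; set s := Sz q z m; set H := Hq q n'.
set L := q ^+ l; set M := q ^+ m => nzm nzn nl.
by field; rewrite nzm nzn nl hq.
Qed.

End S.

Theorem corollary3p2 (F : fieldType) (q z : F) (n l : nat)
  (hln : (l <= n)%N)
  (hq : q != 0) (hz : z != 0)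
  (hqk : forall k : nat, (1 <= k <= n)%N -> 1 - q ^+ k != 0)
  (hzk : forall k : nat, (1 <= k <= n - l)%N -> 1 - z * q ^+ k.-1 != 0) :
  \sum_(1 <= k < n.+1)
     qbinom q n k * (qpoch (q / z) q k * qpoch (z * q ^- l) q (n - k))
       / (1 - q ^+ k) * z ^+ k
  = qpoch (z * q ^- l) q n *
    (\sum_(1 <= k < (n - l).+1) (z * q ^+ k.-1) / (1 - z * q ^+ k.-1)
     - \sum_(1 <= k < n.+1) q ^+ k / (1 - q ^+ k)).
Proof.
have := @mainL F q z hq hz (n - l) n l erefl hln hqk hzk.
rewrite /Gen /Sz /Hq => E.
have H1 : \sum_(k < n.+1) q ^+ k / (1 - q ^+ k) = \sum_(1 <= k < n.+1) q ^+ k / (1 - q ^+ k).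
  by rewrite -(big_mkord xpredT (fun k => q ^+ k / (1 - q ^+ k))) big_ltn // expr0 subrr invr0 mulr0 add0r.
rewrite -H1 -E.
rewrite -(big_mkord xpredT (fun k => qbinom q n k *
     (qpoch (q / z) q k * qpoch (z * q ^- l) q (n - k)) / (1 - q ^+ k) * z ^+ k)).
by rewrite big_ltn // expr0 subrr invr0 mulr0 mul0r add0r.
Qed.
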